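(* Let $(P,\omega)$ be a labeled poset with $|P|=p$ and let $s\in P$. A function $f:P\to\mathbb{N}$ is a $(P,\omega;s)$-partition if and only if $f'$ is $w$-compatible for some $w\in\mathcal{L}(P,\omega;s)$. In other words, $$\mathcal{A}(P,\omega;s)=\dot\bigcup_{w\in\mathcal{L}(P,\omega;s)} S_w,$$ a disjoint union.
   Context: $\mathbb{N}=\{0,1,2,\dots\}$. A labeling is a bijection $\omega:P\to[p]$. A linear extension is an order-preserving bijection $g:P\to[p]$; $\mathcal{L}(P,\omega)$ is the set of words (permutations) $w=\omega\circ g^{-1}=w_1\cdots w_p$ over all linear extensions $g$, and $\mathcal{L}(P,\omega;s)$ is the set of those $w\in\mathcal{L}(P,\omega)$ with $w_p=\omega(s)$. A $(P,\omega)$-partition is a map $f:P\to\mathbb{N}$ such that $f(x)\ge f(y)$ whenever $x\le y$, and $f(x)>f(y)$ whenever $x\le y$ and $\omega(x)>\omega(y)$. A $(P,\omega;s)$-partition is a $(P,\omega)$-partition $f$ such that $f(s)\le f(t)$ for all $t\in P$, and such that $f(s)=f(t)$ for $t\neq s$ implies $\omega(s)>\omega(t)$; $\mathcal{A}(P,\omega;s)$ is the set of these. For $f:P\to\mathbb{N}$ set $f'=f\circ\omega^{-1}:[p]\to\mathbb{N}$. For a permutation $w=w_1\cdots w_p$, a function $f':[p]\to\mathbb{N}$ is $w$-compatible if $f'(w_1)\ge\cdots\ge f'(w_p)$ and $f'(w_i)>f'(w_{i+1})$ whenever $w_i>w_{i+1}$. $S_w$ is the set of all $f:P\to\mathbb{N}$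 such that $f'$ is $w$-compatible. *)

(* Defs.v *)
(* Labeled poset (P, omega) with P a finite partial order,
   [p] rendered as 'I_#|P| (labels 0..p-1 instead of 1..p; only their
   relative order matters). Words w = w_1 ... w_p are rendered as finite
   functions from positions 'I_#|P| (0-based) to labels 'I_#|P|. *)
From HB Require Import structures.
From mathcomp Require Import all_boot all_order.
Set Implicit Arguments. Unset Strict Implicit. Unset Printing Implicit Defensive.
Import Order.TTheory.

Section Defs.
Context {d : Order.disp_t} {P : finPOrderType d}.

Local Notation p := #|P|.

Definition labeling (omega : P -> 'I_p) : Prop := bijective omega.

Definition linear_extension (g : P -> 'I_p) : Prop :=
  bijective g /\ (forall x y : P, (x <= y)%O -> (g x <= g y)%N).

(* w = omega o g^{-1} for some linear extension g, i.e. w (g x) = omega x *)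
Definition in_L (omega : P -> 'I_p) (w : {ffun 'I_p -> 'I_p}) : Prop :=
  exists g : P -> 'I_p, linear_extension g /\ forall x : P, w (g x) = omega x.

Definition in_Ls (omega : P -> 'I_p) (s : P) (w : {ffun 'I_p -> 'I_p}) : Prop :=
  in_L omega w /\ (forall i : 'I_p, (i.+1 = p)%N -> w i = omega s).

Definition P_partition (omega : P -> 'I_p) (f : P -> nat) : Prop :=
  forall x y : P, (x <= y)%O ->
    (f y <= f x)%N /\ ((omega y < omega x)%N -> (f y < f x)%N).

Definition Ps_partition (omega : P -> 'I_p) (s : P) (f : P -> nat) : Prop :=
  P_partition omega f /\
  (forall t : P, (f s <= f t)%N) /\
  (forall t : P, t != s -> f s = f t -> (omega t < omega s)%N).

(* f' = f o omega^{-1} (omega is a bijection; the default 0 is never used) *)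
Definition fprime (omega : P -> 'I_p) (f : P -> nat) (k : 'I_p) : nat :=
  match [pick x | omega x == k] with Some x => f x | None => 0%N end.

Definition w_compatible (w : {ffun 'I_p -> 'I_p}) (f' : 'I_p -> nat) : Prop :=
  forall i j : 'I_p, (j = i.+1 :> nat) ->
    (f' (w j) <= f' (w i))%N /\ ((w j < w i)%N -> (f' (w j) < f' (w i))%N).

Definition in_S (omega : P -> 'I_p) (w : {ffun 'I_p -> 'I_p}) (f : P -> nat) : Prop :=
  w_compatible w (fprime omega f).

End Defs.

(* Main.v *)
Require Import Defs.
From mathcomp Require Import all_boot all_order.
From mathcomp Require Import zify.
Set Implicit Arguments. Unset Strict Implicit. Unset Printing Implicit Defensive.

Section K.
Variables (n : nat) (F : 'I_n -> nat).
Definition ltK (a b : 'I_n) := (F b < F a) || ((F a == F b) && (a < b)).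
Definition leK (a b : 'I_n) := (F b < F a) || ((F a == F b) && (a <= b)).

Lemma ltK_trans : transitive ltK.
Proof. move=> b a c; rewrite /ltK => /orP[H1|/andP[/eqP H1 H2]] /orP[H3|/andP[/eqP H3 H4]];
  apply/orP; (left; lia) || (right; apply/andP; split; [apply/eqP; lia| lia]). Qed.
Lemma ltK_irr : irreflexive ltK.
Proof. move=> a; rewrite /ltK ltnn ltnn; by case: (_ == _). Qed.
Lemma leK_trans : transitive leK.
Proof. move=> b a c; rewrite /leK => /orP[H1|/andP[/eqP H1 H2]] /orP[H3|/andP[/eqP H3 H4]];
  apply/orP; (left; lia) || (right; apply/andP; split; [apply/eqP; lia| lia]). Qed.
Lemma leK_refl : reflexive leK.
Proof. move=> a; by rewrite /leK eqxx leqnn orbT. Qed.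
Lemma leK_total : total leK.
Proof. move=> a b; rewrite /leK.
case: (ltngtP (F a) (F b)) => H; rewrite ?orbT ?H //= ?eqxx /=; try by [].
by rewrite leq_total. Qed.
Lemma leK_anti a b : leK a b -> leK b a -> a = b.
Proof. rewrite /leK => /orP[H1|/andP[/eqP H1 H2]] /orP[H3|/andP[/eqP H3 H4]]; try lia.
apply/val_inj; apply/eqP; rewrite eqn_leq H2 H4 //. Qed.
Lemma leK_ltK a b : leK a b -> a != b -> ltK a b.
Proof. rewrite /leK /ltK => /orP[->//|/andP[H1 H2]] Hn; apply/orP; right; rewrite H1 /=.
have : val a != val b by apply: contra Hn => /eqP H; apply/eqP/val_inj.
by move=> Hne; rewrite ltn_neqAle H2 andbT. Qed.
Lemma ltK_leK a b : ltK a b -> leK b a -> False.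
Proof. rewrite /leK /ltK => /orP[H1|/andP[/eqP H1 H2]] /orP[H3|/andP[/eqP H3 H4]]; lia. Qed.
Lemma ltK_compat a b : ltK a b -> F b <= F a /\ (b < a -> F b < F a).
Proof. rewrite /ltK => /orP[H1|/andP[/eqP H1 H2]]; split; lia. Qed.
Lemma compat_ltK a b : F b <= F a -> (b < a -> F b < F a) -> a != b -> ltK a b.
Proof. move=> H1 H2 Hn; rewrite /ltK.
case H: (F b < F a) => //=.
have HF : F a = F b by lia.
rewrite HF eqxx /= ltn_neqAle.
have Hv : val a != val b by apply: contra Hn => /eqP E; apply/eqP/val_inj.
rewrite Hv /=; case: (leqP a b) => // Hab.
by move: (H2 Hab); lia. Qed.
End K.

Section Main.
Context {d : Order.disp_t} {P : finPOrderType d}.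
Local Notation n := #|P|.
Variables (omega : P -> 'I_n) (homega : labeling omega) (s : P).

Lemma omega_inj : injective omega.
Proof. exact: bij_inj homega. Qed.

Lemma fprimeE f x : fprime omega f (omega x) = f x.
Proof.
rewrite /fprime; case: pickP => [y /eqP Hy|H]; first by rewrite (omega_inj Hy).
by move: (H x); rewrite eqxx.
Qed.

Lemma w_inj w : in_L omega w -> injective w.
Proof.
case=> g [[[gi g1 g2] _] Hw] i j Hij.
have E1 := Hw (gi i); have E2 := Hw (gi j); rewrite !g2 in E1 E2.
rewrite Hij E2 in E1; move/omega_inj: E1 => E.
by rewrite -(g2 i) -(g2 j) E.
Qed.

Lemma pairwise F (w : {ffun 'I_n -> 'I_n}) : injective w -> w_compatible w F ->
  forall i j : 'I_n, i < j -> ltK F (w i) (w j).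
Proof.
move=> winj hc.
have step : forall i j : 'I_n, (j : nat) = (i : nat).+1 -> ltK F (w i) (w j).
  move=> i j E; case: (hc i j E) => h1 h2; apply: compat_ltK => //.
  apply/negP => /eqP /winj E'; rewrite E' in E; lia.
suff H : forall k (i j : 'I_n), (j : nat) = i + k.+1 -> ltK F (w i) (w j).
  by move=> i j lt; apply: (H (j - i.+1)); lia.
elim=> [|k IH] i j E; first by apply: step; lia.
have Hj' : (j.-1 < n) by have := ltn_ord j; lia.
apply: (@ltK_trans _ F (w (Ordinal Hj'))).
  by apply: IH => /=; rewrite E addnS.
by apply: step => /=; rewrite E addnS.
Qed.

Lemma uniqw F (w1 w2 : {ffun 'I_n -> 'I_n}) : injective w1 -> injective w2 ->
  (forall i j : 'I_n, i < j -> ltK F (w1 i) (w1 j)) ->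
  (forall i j : 'I_n, i < j -> ltK F (w2 i) (w2 j)) -> w1 = w2.
Proof.
move=> i1 i2 p1 p2.
have sortedw : forall w : {ffun 'I_n -> 'I_n}, (forall i j : 'I_n, i < j -> ltK F (w i) (w j)) ->
   sorted (ltK F) (map w (enum 'I_n)).
  move=> w Hw; apply: (homo_sorted (e:= fun i j : 'I_n => i < j)).
    by move=> i j; exact: Hw.
  by have := iota_ltn_sorted 0 n; rewrite -val_enum_ord sorted_map.
have memw : forall w : {ffun 'I_n -> 'I_n}, injective w -> forall k, k \in map w (enum 'I_n).
  move=> w winj k; case: (injF_bij winj) => wi _ h2.
  by rewrite -(h2 k) mem_map // mem_enum.
have E : map w1 (enum 'I_n) = map w2 (enum 'I_n).
  apply: (irr_sorted_eq (@ltK_trans _ F) (@ltK_irr _ F) (sortedw _ p1) (sortedw _ p2)).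
  by move=> k; rewrite !memw.
apply/ffunP => i.
by apply: ((eq_in_map w1 w2 (enum 'I_n)).2 E i); rewrite mem_enum.
Qed.


Lemma back f w : in_Ls omega s w -> in_S omega w f -> Ps_partition omega s f.
Proof.
move=> [HL Hs] Hc.
have winj := w_inj HL.
have pw := pairwise winj Hc.
case: HL => g [[gbij gmon] Hw].
have ginj := bij_inj gbij.
have key : forall x y, g x < g y -> ltK (fprime omega f) (omega x) (omega y).
  by move=> x y lt; rewrite -!Hw; apply: pw.
have key2 : forall x y, g x < g y -> f y <= f x /\ (omega y < omega x -> f y < f x).
  by move=> x y /key /ltK_compat; rewrite !fprimeE.
have n0 : 0 < n by apply/card_gt0P; exists s.
have Hi : n.-1 < n by lia.
have gs : g s = Ordinal Hi.
  apply: winj; rewrite Hw Hs //=; exact: (prednK n0).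
have gt : forall t, t != s -> g t < g s.
  move=> t ts; rewrite gs /=.
  have : g t != g s by apply: contra ts => /eqP /ginj ->.
  rewrite gs; have := ltn_ord (g t) => H1 H2.
  have H3 : (g t : nat) != n.-1 by apply: contra H2 => /eqP E; apply/eqP/val_inj.
  by rewrite ltn_neqAle H3 /= -ltnS prednK.
split; [|split].
- move=> x y le; case: (eqVneq x y) => [->|nxy]; first by split => //; rewrite ltnn.
  apply: key2; have := gmon x y le.
  have : g x != g y by apply: contra nxy => /eqP /ginj ->.
  move=> H1 H2; have H3 : (g x : nat) != g y by apply: contra H1 => /eqP E; apply/eqP/val_inj.
  lia.
- move=> t; case: (eqVneq t s) => [->//|ts].
  by case: (key2 _ _ (gt t ts)).
- move=> t ts E; have := key _ _ (gt t ts); rewrite /ltK !fprimeE E ltnn /=.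
  by case/andP.
Qed.


Lemma fwd f : Ps_partition omega s f -> exists w, in_Ls omega s w /\ in_S omega w f.
Proof.
case=> Hpp [Hmin Hlt].
set F := fprime omega f.
set sl := sort (leK F) (enum 'I_n).
have Hsz : size sl = n by rewrite size_sort size_enum_ord.
have Hmem : forall k, k \in sl by move=> k; rewrite mem_sort mem_enum.
have Hun : uniq sl by rewrite sort_uniq enum_uniq.
have Hsort : sorted (leK F) sl by apply: sort_sorted; exact: leK_total.
have Hle : forall i j, i <= j -> j < n -> leK F (nth (omega s) sl i) (nth (omega s) sl j).
  move=> i j ij jn; apply: (sorted_leq_nth (@leK_trans _ F) (@leK_refl _ F)) => //;
   rewrite inE Hsz //; lia.
have Hidx : forall x, index (omega x) sl < n by move=> x; rewrite -{2}Hsz index_mem.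
pose g := fun x => Ordinal (Hidx x).
pose w := [ffun i : 'I_n => nth (omega s) sl i].
have Hw : forall x, w (g x) = omega x by move=> x; rewrite ffunE /= nth_index.
have Hmax : forall k, leK F k (omega s).
  move=> k; case: homega => oi o1 o2; rewrite -(o2 k); set t := oi k.
  rewrite /leK /F !fprimeE; have := Hmin t; rewrite leq_eqVlt => /orP[/eqP E|->//].
  rewrite E ltnn eqxx /=; case: (eqVneq t s) => [->//|ts].
  by apply: ltnW; apply: Hlt.
exists w; split; [split|].
- exists g; split => //; split.
  + apply: inj_card_bij; last by rewrite card_ord.
    by move=> x y E; apply: omega_inj; rewrite -(Hw x) -(Hw y) E.
  + move=> x y le; case: (eqVneq x y) => [->//|nxy].
    case: (Hpp x y le) => h1 h2.
    rewrite leqNgt; apply/negP => lt.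
    have := Hle _ _ (ltnW lt) (ltn_ord (g x)); rewrite /= !nth_index //.
    rewrite /leK /F !fprimeE => /orP[H|/andP[/eqP E H]]; first lia.
    have Hne : (omega y : nat) != omega x.
      apply: contra nxy => /eqP Eo; have /omega_inj -> // : omega y = omega x by apply/val_inj.
    have : f y < f x by apply: h2; rewrite ltn_neqAle Hne H.
    lia.
- move=> i Hi; rewrite ffunE.
  apply: (@leK_anti _ F); first exact: Hmax.
  rewrite -{1}(nth_index (omega s) (Hmem (omega s))); apply: Hle; last exact: ltn_ord.
  have := Hidx s; lia.
- move=> i j E; rewrite !ffunE.
  have H1 : leK F (nth (omega s) sl i) (nth (omega s) sl j) by apply: Hle; [lia|exact: ltn_ord].
  have H2 : nth (omega s) sl i != nth (omega s) sl j.
    rewrite nth_uniq // ?Hsz ?ltn_ord //.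
    by apply/negP => /eqP E'; move: E; rewrite E'; lia.
  exact: ltK_compat (leK_ltK H1 H2).
Qed.

End Main.

Theorem lemma3p2 (d : Order.disp_t) (P : finPOrderType d)
  (omega : P -> 'I_#|P|) (homega : labeling omega) (s : P) :
  (forall f : P -> nat,
     Ps_partition omega s f <->
     exists w : {ffun 'I_#|P| -> 'I_#|P|}, in_Ls omega s w /\ in_S omega w f) /\
  (forall (w1 w2 : {ffun 'I_#|P| -> 'I_#|P|}) (f : P -> nat),
     in_Ls omega s w1 -> in_Ls omega s w2 ->
     in_S omega w1 f -> in_S omega w2 f -> w1 = w2).
Proof.
split.
- move=> f; split; first exact: fwd.
  by case=> w [H1 H2]; exact: back H1 H2.
- move=> w1 w2 f [L1 _] [L2 _] S1 S2.
  have i1 := w_inj homega L1; have i2 := w_inj homega L2.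
  exact: (uniqw i1 i2 (pairwise i1 S1) (pairwise i2 S2)).
Qed.
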